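(* The short exact sequence $1\to K\to G_2\xrightarrow{\phi}S_8\to1$ is split, i.e. there is a subgroup $H\subseteq G_2$ such that $\phi|_H:H\to S_8$ is an isomorphism.
   Context: The $2\times2\times2$ Rubik's cube consists of 8 corner cubelets, each carrying 3 colored stickers. Corner positions are numbered 1 = top-front-left, 2 = top-front-right, 3 = top-back-left, 4 = top-back-right, 5 = bottom-front-left, 6 = bottom-front-right, 7 = bottom-back-left, 8 = bottom-back-right. $G_2$ is the subgroup of the symmetric group on the 24 stickers generated by the six moves $u,d,f,b,l,r$ rotating respectively the top, bottom, front, back, left, right layer of four cubelets by $90^\circ$ clockwise as seen from outside facing that face. $\phi:G_2\to S_8$ is the (surjective) homomorphism recording the permutation of corner positions, and $K=\ker\phi$. *)

(* Defs.v *)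
From mathcomp Require Import all_boot all_fingroup.
Set Implicit Arguments.
Local Open Scope group_scope. Unset Strict Implicit. Unset Printing Implicit Defensive.

(* Geometry: x axis points left->right, y axis bottom->top, z axis back->front.
   A corner position is described by three booleans: its coordinate on each
   axis is positive (true) or negative (false).
   Corner positions are 'I_8, with (paper's number) - 1 =
        4 * [bottom] + 2 * [back] + [right]
   so 0 = top-front-left, 1 = top-front-right, 2 = top-back-left,
   3 = top-back-right, 4 = bottom-front-left, 5 = bottom-front-right,
   6 = bottom-back-left, 7 = bottom-back-right. *)
Definition corner := 'I_8.

(* i mod n.+1 as an element of 'I_n.+1 (computes by vm_compute, unlike inord) *)
Definition ordm (n i : nat) : 'I_n.+1 := Ordinal (ltn_pmod i (ltn0Sn n)).

(* coordinate of corner c on axis k (0 = x, 1 = y, 2 = z): true = positive *)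
Definition coord (c : corner) (k : 'I_3) : bool :=
  match val k with
  | 0 => odd c
  | 1 => c < 4
  | _ => ~~ odd (c %/ 2)
  end.

Definition corner_of (px py pz : bool) : corner :=
  ordm 7 (4 * ~~ py + 2 * ~~ pz + px).

(* A sticker is a pair (c, k): the sticker at corner position c lying on the
   face perpendicular to axis k (the face of sign coord c k on that axis). *)
Definition sticker := (corner * 'I_3)%type.

Definition nxt (k : 'I_3) : 'I_3 := ordm 2 (val k).+1.

(* Quarter turn of the layer {c | coord c a = s}, clockwise as seen from
   outside the face with outward normal (s ? +e_a : -e_a).  Clockwise seen
   from outside = rotation by -90 degrees about the outward normal, i.e.
   by -90 degrees about e_a if s, by +90 degrees about e_a otherwise.
   With (a,i,j) cyclic: +90 about e_a maps (p_i,p_j) to (-p_j,p_i),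
   -90 about e_a maps (p_i,p_j) to (p_j,-p_i); sticker axes i and j swap. *)
Definition turn_fun (a : 'I_3) (s : bool) (st : sticker) : sticker :=
  let: (c, k) := st in
  if coord c a != s then st else
  let i := nxt a in let j := nxt i in
  let pi := coord c i in let pj := coord c j in
  let pi' := if s then pj else ~~ pj in
  let pj' := if s then ~~ pi else pi in
  let p (m : 'I_3) := if m == a then s else if m == i then pi' else pj' in
  let c' := corner_of (p (ordm 2 0)) (p (ordm 2 1)) (p (ordm 2 2)) in
  let k' := if k == i then j else if k == j then i else a in
  (c', k').

Definition sticker_list : seq sticker :=
  [seq (ordm 7 c, ordm 2 k) | c <- iota 0 8, k <- iota 0 3].

Lemma turn_fun4_all :
  all (fun a => all (fun s => all (fun x =>
     turn_fun a s (turn_fun a s (turn_fun a s (turn_fun a s x))) == x)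
     sticker_list) [:: true; false]) [seq ordm 2 a | a <- iota 0 3].
Proof. by vm_compute. Qed.

Lemma turn_fun_inj a s : injective (turn_fun a s).
Proof.
apply: (@can_inj _ _ _ (fun x => turn_fun a s (turn_fun a s (turn_fun a s x)))).
case=> c k; apply/eqP.
have Ha : a \in [seq ordm 2 a | a <- iota 0 3].
  apply/mapP; exists (val a); first by rewrite mem_iota /= ltn_ord.
  by apply: val_inj; rewrite /= modn_small.
move/allP: turn_fun4_all => /(_ a Ha)/allP/(_ s).
rewrite !inE; case: s => /(_ isT)/allP; apply;
  apply/allpairsP; exists (val c, val k); rewrite !mem_iota /= !ltn_ord;
  split=> //; congr pair; apply: val_inj; by rewrite /= modn_small ?ltn_ord.
Qed.

Definition turn a s : {perm sticker} := perm (@turn_fun_inj a s).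

Definition ax_x : 'I_3 := ordm 2 0.
Definition ax_y : 'I_3 := ordm 2 1.
Definition ax_z : 'I_3 := ordm 2 2.

Definition mv_u := turn ax_y true.
Definition mv_d := turn ax_y false.
Definition mv_f := turn ax_z true.
Definition mv_b := turn ax_z false.
Definition mv_l := turn ax_x false.
Definition mv_r := turn ax_x true.

Definition G2 : {set {perm sticker}} :=
  <<[set mv_u; mv_d; mv_f; mv_b; mv_l; mv_r]>>.

(* For g in G_2 this is a permutation;
   for arbitrary permutations of the stickers we default to 1. *)
Definition phi_fun (g : {perm sticker}) (c : corner) : corner := (g (c, ord0)).1.

Definition phi (g : {perm sticker}) : {perm corner} :=
  match boolP (injectiveb (phi_fun g)) with
  | AltTrue h => perm (injectiveP _ h)
  | AltFalse _ => 1
  end.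

(* Main.v *)
Require Import Defs.
From mathcomp Require Import all_boot all_fingroup.
Set Implicit Arguments. Unset Strict Implicit. Unset Printing Implicit Defensive.
Local Open Scope group_scope.

Definition par (c : corner) : bool := odd c (+) odd (c %/ 2) (+) (3 < c).
Definition swxz (k : 'I_3) : 'I_3 := ordm 2 (2 - k).

Lemma swxzK : involutive swxz.
Proof. by case=> [[|[|[|]]] Hk] //; apply: val_inj. Qed.

Definition psi_fun (f : corner -> corner) (x : sticker) : sticker :=
  let: (c, k) := x in (f c, if par c != par (f c) then swxz k else k).

Lemma psi_inj (s : {perm corner}) : injective (psi_fun s).
Proof.
case=> c k [c' k'] /= [/perm_inj Hc]; subst c'.
case: ifP => _ Hk; last by rewrite Hk.
by rewrite -(swxzK k) Hk swxzK.
Qed.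

Definition psi (s : {perm corner}) : {perm sticker} := perm (@psi_inj s).

Lemma psiM : {morph psi : a b / a * b}.
Proof.
move=> a b; apply/permP => -[c k].
rewrite permM !permE /= permM.
case: (par c); case: (par (a c)); case: (par (b (a c))) => /=; by rewrite ?swxzK.
Qed.

Definition psim := @Morphism _ _ [set: {perm corner}] psi (in2W psiM).

Lemma phi_psi s : phi (psi s) = s.
Proof.
have E : phi_fun (psi s) =1 s by move=> c; rewrite /phi_fun permE.
rewrite /phi; destruct (boolP _) as [h|h].
  by apply/permP => c; rewrite permE E.
by case/negP: h; apply/injectiveP => x y; rewrite !E => /perm_inj.
Qed.

Lemma turn_G2 a s : turn a s \in G2.
Proof.
apply: mem_gen.
case: a => [[|[|[|//]]] Ha].
- have -> : Ordinal Ha = ax_x by apply: val_inj.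
  by case: s; rewrite !inE eqxx ?orbT.
- have -> : Ordinal Ha = ax_y by apply: val_inj.
  by case: s; rewrite !inE eqxx ?orbT.
- have -> : Ordinal Ha = ax_z by apply: val_inj.
  by case: s; rewrite !inE eqxx ?orbT.
Qed.

Definition eval_fun (w : seq ('I_3 * bool)) (x : sticker) : sticker :=
  foldl (fun y m => turn_fun m.1 m.2 y) x w.
Definition eval_perm (w : seq ('I_3 * bool)) : {perm sticker} :=
  \prod_(m <- w) turn m.1 m.2.

Lemma eval_permE w x : eval_perm w x = eval_fun w x.
Proof.
elim: w x => [|m w IH] x; first by rewrite /eval_perm big_nil perm1.
by rewrite /eval_perm big_cons permM -/(eval_perm w) IH /= permE.
Qed.

Lemma eval_G2 w : eval_perm w \in G2.
Proof.
elim: w => [|m w IH]; first by rewrite /eval_perm big_nil group1.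
by rewrite /eval_perm big_cons groupM ?turn_G2.
Qed.

Local Open Scope nat_scope.
Definition wtab : seq (seq (seq (nat * bool))) := [::
  [:: [::];
     [::(0,true); (0,true); (2,true); (2,true); (1,true); (0,true); (0,true); (1,true); (1,true); (1,true); (2,true); (2,true); (1,true); (0,true); (0,true); (1,true); (1,true); (1,true); (0,true); (0,true); (1,true)];
     [::(0,true); (0,true); (1,true); (0,true); (0,true); (2,true); (2,true); (1,true); (0,true); (0,true); (2,true); (2,true); (1,true); (0,true); (0,true); (2,true); (2,true); (1,true); (2,true); (2,true); (1,true); (1,true); (1,true)];
     [::(0,true); (0,true); (1,true); (1,true); (2,true); (2,true); (1,true); (2,true); (2,true); (1,true); (1,true); (0,true); (0,true); (1,true); (2,true); (2,true); (1,true); (1,true); (0,true); (0,true); (1,true)];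
     [::(1,true); (2,true); (2,true); (1,true); (2,true); (2,true); (1,true); (1,true); (0,true); (0,true); (1,true); (0,true); (0,true); (1,true); (1,true); (2,true); (2,true); (1,true); (0,true); (0,true); (1,true)];
     [::(0,true); (0,true); (1,true); (0,true); (0,true); (1,true); (1,true); (2,true); (2,true); (1,true); (0,true); (0,true); (1,true); (1,true); (2,true); (2,true); (1,true); (2,true); (2,true); (1,true); (1,true)];
     [::(1,true); (1,true); (0,true); (0,true); (1,true); (2,true); (2,true); (1,true); (1,true); (0,true); (0,true); (1,true); (2,true); (2,true); (1,true); (1,true); (0,false); (0,false); (1,false); (2,false); (2,false)];
     [::(0,true); (0,true); (1,true); (0,true); (0,true); (1,true); (1,true); (1,true); (2,true); (2,true); (1,true); (0,true); (0,true); (2,true); (2,true); (1,true); (0,true); (0,true); (2,true); (2,true); (1,true); (2,true); (2,true)]];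
  [:: [::];
     [::];
     [::(0,true); (0,true); (1,true); (1,true); (2,true); (2,true); (1,true); (0,true); (0,true); (1,true); (1,true); (2,true); (2,true); (1,true); (2,true); (2,true); (1,true); (1,true); (0,true); (0,true); (1,true)];
     [::(0,true); (0,true); (1,true); (0,true); (0,true); (1,true); (1,true); (1,true); (2,true); (2,true); (1,true); (2,true); (2,true); (0,true); (0,true); (1,true); (2,true); (2,true); (1,true); (1,true); (1,true)];
     [::(0,true); (0,true); (1,true); (2,true); (2,true); (1,true); (1,true); (0,true); (0,true); (1,true); (0,true); (0,true); (1,true); (1,true); (2,true); (2,true); (1,true); (2,true); (2,true); (1,true); (1,true)];
     [::(1,true); (0,true); (0,true); (1,true); (0,true); (0,true); (1,true); (1,true); (2,true); (2,true); (1,true); (0,true); (0,true); (1,true); (1,true); (2,true); (2,true); (1,true); (2,true); (2,true); (1,true)];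
     [::(0,true); (0,true); (1,true); (0,true); (0,true); (2,true); (2,true); (1,true); (0,true); (0,true); (1,true); (1,true); (1,true); (0,true); (0,true); (1,true); (2,true); (2,true); (0,true); (0,true); (1,false); (2,true); (2,true)];
     [::(1,true); (1,true); (0,true); (0,true); (1,true); (0,true); (0,true); (1,true); (1,true); (2,true); (2,true); (1,true); (2,true); (2,true); (1,true); (1,true); (0,true); (0,true); (1,true); (2,true); (2,true)]];
  [:: [::];
     [::];
     [::];
     [::(0,true); (0,true); (2,true); (2,true); (1,true); (0,true); (0,true); (2,true); (2,true); (1,true); (0,true); (0,true); (2,true); (2,true); (1,true); (0,true); (0,true); (2,true); (2,true); (1,true); (0,true); (0,true); (2,true); (2,true); (1,true)];
     [::(1,true); (1,true); (0,true); (0,true); (1,true); (2,true); (2,true); (1,true); (1,true); (0,true); (0,true); (1,true); (0,true); (0,true); (1,true); (1,true); (2,true); (2,true); (1,true); (2,true); (2,true)];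
     [::(0,true); (0,true); (1,true); (0,true); (0,true); (1,true); (1,true); (1,true); (0,true); (0,true); (1,true); (0,true); (0,true); (2,true); (2,true); (1,true); (2,true); (2,true); (0,true); (0,true); (1,true); (2,true); (2,true)];
     [::(1,true); (0,true); (0,true); (1,true); (2,true); (2,true); (1,true); (1,true); (0,true); (0,true); (1,true); (2,true); (2,true); (1,true); (1,true); (0,true); (0,true); (1,false); (0,false); (0,false); (1,false)];
     [::(0,true); (0,true); (1,true); (0,true); (0,true); (1,true); (1,true); (2,true); (2,true); (1,true); (2,true); (2,true); (1,true); (1,true); (0,true); (0,true); (1,true); (2,true); (2,true); (1,true); (1,true)]];
  [:: [::];
     [::];
     [::];
     [::];
     [::(0,true); (0,true); (1,true); (0,true); (0,true); (2,true); (2,true); (1,true); (0,true); (0,true); (2,true); (2,true); (1,true); (0,true); (0,true); (1,true); (1,true); (1,true); (2,true); (2,true); (1,true); (2,true); (2,true)];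
     [::(1,true); (1,true); (0,true); (0,true); (1,true); (0,true); (0,true); (1,true); (1,true); (2,true); (2,true); (1,true); (0,true); (0,true); (1,true); (1,true); (2,true); (2,true); (1,true); (2,true); (2,true)];
     [::(0,true); (0,true); (1,true); (2,true); (2,true); (1,true); (1,true); (0,true); (0,true); (1,true); (2,true); (2,true); (1,true); (1,true); (0,true); (0,true); (1,true); (2,false); (2,false); (1,false); (1,false)];
     [::(1,true); (2,true); (2,true); (1,true); (0,true); (0,true); (1,true); (1,true); (2,true); (2,true); (1,true); (2,true); (2,true); (1,true); (1,true); (0,true); (0,true); (1,true); (0,true); (0,true); (1,true)]];
  [:: [::];
     [::];
     [::];
     [::];
     [::];
     [::(0,true); (0,true); (2,true); (2,true); (1,true); (0,true); (0,true); (2,true); (2,true); (1,true); (0,true); (0,true); (1,true); (1,true); (1,true); (2,true); (2,true); (1,true); (2,true); (2,true); (0,true); (0,true); (1,true)];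
     [::(0,true); (0,true); (1,true); (0,true); (0,true); (1,true); (1,true); (1,true); (0,true); (0,true); (1,true); (2,true); (2,true); (0,true); (0,true); (1,true); (2,true); (2,true); (1,true); (1,true); (1,false)];
     [::(0,true); (0,true); (1,true); (1,true); (2,true); (2,true); (1,true); (2,true); (2,true); (1,true); (1,true); (0,true); (0,true); (1,true); (0,true); (0,true); (1,true); (1,true); (2,true); (2,true); (1,true)]];
  [:: [::];
     [::];
     [::];
     [::];
     [::];
     [::];
     [::(0,true); (0,true); (1,true); (1,true); (2,true); (2,true); (1,true); (0,true); (0,true); (1,true); (1,true); (2,true); (2,true); (1,true); (0,true); (0,true); (1,true); (1,false); (0,true); (0,true); (1,false)];
     [::(0,true); (0,true); (1,true); (0,true); (0,true); (2,true); (2,true); (1,true); (0,true); (0,true); (1,true); (1,true); (1,true); (2,true); (2,true); (1,true); (0,true); (0,true); (1,true); (1,true); (1,true)]];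
  [:: [::];
     [::];
     [::];
     [::];
     [::];
     [::];
     [::];
     [::(0,true); (0,true); (2,true); (2,true); (1,true); (0,true); (0,true); (1,true); (1,true); (1,true); (0,true); (0,true); (1,true); (0,true); (0,true); (1,true); (1,false); (1,false); (0,false); (0,false); (1,false)]];
  [:: [::];
     [::];
     [::];
     [::];
     [::];
     [::];
     [::];
     [::]]].

Local Open Scope group_scope.
Definition wd (i j : nat) : seq ('I_3 * bool) :=
  map (fun p => (ordm 2 p.1, p.2)) (nth [::] (nth [::] wtab i) j).

Definition swf (a b : corner) (c : corner) : corner :=
  if c == a then b else if c == b then a else c.

Lemma tab_ok : all (fun i => all (fun j => (i < j) ==>
   all (fun x => psi_fun (swf (ordm 7 i) (ordm 7 j)) x == eval_fun (wd i j) x)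
     sticker_list) (iota 0 8)) (iota 0 8).
Proof. by vm_compute. Qed.

Lemma ordmK n (i : 'I_n.+1) : ordm n i = i.
Proof. by apply: val_inj; rewrite /= modn_small. Qed.

Lemma in_sticker_list (x : sticker) : x \in sticker_list.
Proof.
case: x => c k; apply/allpairsP; exists (val c, val k).
by rewrite !mem_iota /= !ltn_ord !ordmK.
Qed.

Lemma tperm_lt (a b : corner) : a < b -> psi (tperm a b) \in G2.
Proof.
move=> ab.
have Hi : (val a : nat) \in iota 0 8 by rewrite mem_iota ltn_ord.
have Hj : (val b : nat) \in iota 0 8 by rewrite mem_iota ltn_ord.
have H1 := elimT allP tab_ok; have H2 := elimT allP (H1 _ Hi).
have H3 := H2 _ Hj; rewrite ab implyTb !ordmK in H3; have H := elimT allP H3.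
have -> : psi (tperm a b) = eval_perm (wd a b).
  apply/permP => x; rewrite eval_permE -(eqP (H x (in_sticker_list x))).
  rewrite permE; case: x => c k /=.
  have -> : tperm a b c = swf a b c.
    by rewrite /swf; case: tpermP => [->|->|/eqP/negbTE-> /eqP/negbTE->]; rewrite ?eqxx //;
       case: eqP => // ->.
  by [].
exact: eval_G2.
Qed.

Lemma psi1 : psi 1 = 1.
Proof. by apply/permP => -[c k]; rewrite permE perm1 /= perm1 eqxx. Qed.

Lemma tperm_G2 (a b : corner) : psi (tperm a b) \in G2.
Proof.
case: (ltngtP a b) => [ab|ba|/val_inj ->].
- exact: tperm_lt.
- by rewrite tpermC; apply: tperm_lt.
- by rewrite tperm1 psi1 group1.
Qed.

Lemma psi_G2 s : psi s \in G2.
Proof.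
have [ts -> _] := prod_tpermP s.
elim: ts => [|t ts IH]; first by rewrite big_nil psi1 group1.
by rewrite big_cons psiM groupM ?tperm_G2.
Qed.

Theorem proposition2p6 :
  exists H : {group {perm sticker}},
    [/\ H \subset G2,
        {in H &, {morph phi : x y / (x * y)%g}},
        {in H &, injective phi} &
        phi @: H = [set: {perm corner}]].
Proof.
exists (psim @* [set: {perm corner}])%G; split.
- by apply/subsetP => x /morphimP[s _ _ ->]; exact: psi_G2.
- move=> x y /morphimP[a _ _ ->] /morphimP[b _ _ ->] /=.
  by rewrite -psiM !phi_psi.
- move=> x y /morphimP[a _ _ ->] /morphimP[b _ _ ->] /=.
  by rewrite !phi_psi => ->.
- apply/setP => s; rewrite inE; apply/imsetP; exists (psi s).
    by apply/morphimP; exists s; rewrite ?inE.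
  by rewrite phi_psi.
Qed.
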